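(* Let $G$ be a Borel groupoid with a Borel Haar system $\{\lambda^u\}_{u\in G^{(0)}}$. Let $\{Y_i\}_{i=1}^\infty$ be a countable cover of $G^{(0)}$ by invariant Borel subsets such that each reduction $G|_{Y_i}$ is Borel amenable. Then $G$ is Borel amenable.
   Context: All Borel spaces are analytic. A Borel Haar system is a family of measures $\lambda^u$ on $G^u=r^{-1}(u)$ with $u\mapsto\int f\,d\lambda^u$ Borel for nonnegative Borel $f$ and $\gamma\cdot\lambda^{s(\gamma)}=\lambda^{r(\gamma)}$. $Y\subset G^{(0)}$ is invariant if $s(\gamma)\in Y$ iff $r(\gamma)\in Y$; $G|_Y=\{\gamma: r(\gamma),s(\gamma)\in Y\}$. A Borel groupoid $H$ is Borel amenable if there is a sequence of Borel systems $\{m_n^u\}_{u\in H^{(0)}}$ of probability measures, $m_n^u$ supported on $H^u$, $u\mapsto\int f\,dm_n^u$ Borel for nonnegative Borel $f$, with $\|\gamma\cdot m_n^{s(\gamma)}-m_n^{r(\gamma)}\|_1\to0$ for all $\gamma\in H$. *)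

(* Defs.v *)
From HB Require Import structures.
From mathcomp Require Import all_boot all_order all_algebra.
From mathcomp Require Import all_classical all_reals all_analysis measurable_realfun.

Set Implicit Arguments.
Unset Strict Implicit.
Unset Printing Implicit Defensive.

Import Order.TTheory GRing.Theory Num.Theory.
Local Open Scope classical_set_scope.
Local Open Scope ring_scope.

(* The unit space G^(0) is represented by the type X, embedded in G by [unit].
   [mul g h] is the product gh, only meaningful when s g = r h. *)
Record groupoid (X G : Type) := Groupoid {
  g_r : G -> X;
  g_s : G -> X;
  g_unit : X -> G;
  g_inv : G -> G;
  g_mul : G -> G -> G }.

Definition is_groupoid (X G : Type) (Gr : groupoid X G) : Prop :=
  let r := g_r Gr in let s := g_s Gr in let e := g_unit Gr in
  let i := g_inv Gr in let m := g_mul Gr in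
  [/\ (forall u, r (e u) = u /\ s (e u) = u),
      (forall g h, s g = r h -> r (m g h) = r g /\ s (m g h) = s h),
      (forall g h k, s g = r h -> s h = r k -> m (m g h) k = m g (m h k)),
      (forall g, m (e (r g)) g = g /\ m g (e (s g)) = g) &
      (forall g, [/\ r (i g) = s g, s (i g) = r g,
                    m g (i g) = e (r g) & m (i g) g = e (s g)])].

Definition composable (X G : Type) (Gr : groupoid X G) : set (G * G) :=
  [set p | g_s Gr p.1 = g_r Gr p.2].

(* Borel groupoid: all structure maps Borel; G^(2) is a Borel subset of G x G
   and points of the unit space are Borel (both automatic for analytic
   Borel spaces). *)
Definition borel_groupoid (d1 d2 : measure_display)
  (X : measurableType d1) (G : measurableType d2) (Gr : groupoid X G) : Prop :=
  [/\ is_groupoid Gr,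
      [/\ measurable_fun setT (g_r Gr), measurable_fun setT (g_s Gr),
          measurable_fun setT (g_unit Gr) & measurable_fun setT (g_inv Gr)],
      measurable (composable Gr),
      measurable_fun (composable Gr) (fun p : G * G => g_mul Gr p.1 p.2) &
      (forall u : X, measurable [set u])].

Definition fiber (X G : Type) (Gr : groupoid X G) (u : X) : set G :=
  [set g | g_r Gr g = u].

Definition translate (R : realType) (X G : Type) (Gr : groupoid X G)
  (g : G) (mu : set G -> \bar R) : set G -> \bar R :=
  fun A => mu (fiber Gr (g_s Gr g) `&` (g_mul Gr g @^-1` A)).

Definition haar_system (R : realType) (d1 d2 : measure_display)
  (X : measurableType d1) (G : measurableType d2) (Gr : groupoid X G)
  (lam : X -> {measure set G -> \bar R}) : Prop :=
  [/\ (forall u, lam u (~` fiber Gr u) = 0%E),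
      (forall f : G -> \bar R, measurable_fun setT f -> (forall x, (0 <= f x)%E) ->
         measurable_fun setT (fun u => (\int[lam u]_x f x)%E)) &
      (forall g A, measurable A ->
         translate Gr g (lam (g_s Gr g)) A = lam (g_r Gr g) A)].

Definition invariant_set (X G : Type) (Gr : groupoid X G) (Y : set X) : Prop :=
  forall g, Y (g_s Gr g) <-> Y (g_r Gr g).

Definition reduction (X G : Type) (Gr : groupoid X G) (Y : set X) : set G :=
  [set g | Y (g_r Gr g) /\ Y (g_s Gr g)].

(* Total variation norm ||mu - nu||_1 = |mu - nu|(G)
   = sup_A ((mu - nu)(A) - (mu - nu)(G \ A)) (A Borel). *)
Definition tv_norm (R : realType) (d : measure_display) (G : measurableType d)
  (mu nu : set G -> \bar R) : \bar R :=
  ereal_sup [set ((mu A - nu A) - (mu (~` A) - nu (~` A)))%E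
            | A in [set A : set G | measurable A]].

(* Borel amenability of the reduction G|_Y (for Y invariant Borel): the
   Borel structure on G|_Y and on Y is the trace Borel structure. A system
   {m_n^u}_{u in Y} is given by values of m n u for u in Y. *)
Definition borel_amenable_on (R : realType) (d1 d2 : measure_display)
  (X : measurableType d1) (G : measurableType d2) (Gr : groupoid X G)
  (Y : set X) : Prop :=
  exists m : nat -> X -> {measure set G -> \bar R},
    [/\ (forall n u, Y u -> m n u setT = 1%E),
        (forall n u, Y u -> m n u (~` fiber Gr u) = 0%E),
        (forall n (f : G -> \bar R), measurable_fun (reduction Gr Y) f ->
           (forall x, reduction Gr Y x -> (0 <= f x)%E) ->
           measurable_fun Y (fun u => (\int[m n u]_(x in reduction Gr Y) f x)%E)) &
        (forall g, reduction Gr Y g ->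
           (fun n => tv_norm (translate Gr g (m n (g_s Gr g))) (m n (g_r Gr g)))
             @ \oo --> 0%E)].

Definition borel_amenable (R : realType) (d1 d2 : measure_display)
  (X : measurableType d1) (G : measurableType d2) (Gr : groupoid X G) : Prop :=
  borel_amenable_on R Gr setT.

(* Main.v *)
Require Import Defs.
From HB Require Import structures.
From mathcomp Require Import all_boot all_order all_algebra.
From mathcomp Require Import all_classical all_reals all_analysis measurable_realfun.
Import Order.TTheory GRing.Theory Num.Theory.
Local Open Scope classical_set_scope.
Local Open Scope ring_scope.

Lemma int_restr (R : realType) d (T : measurableType d)
  (mu : {measure set T -> \bar R}) (D : set T) (f : T -> \bar R) :
  measurable D -> measurable_fun setT f -> (forall x, (0 <= f x)%E) ->
  mu (~` D) = 0%E -> (\int[mu]_x f x = \int[mu]_(x in D) f x)%E.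
Proof.
move=> mD mf f0 mu0.
rewrite -(setUv D) ge0_integral_setU //.
- rewrite [X in (_ + X)%E]null_set_integral ?adde0 //.
  + exact: measurableC.
  + exact: measurable_funS mf.
- exact: measurableC.
- by rewrite setUv.
- by rewrite /disj_set setICr.
Qed.

Theorem lemma3p3 (R : realType) (d1 d2 : measure_display)
  (X : measurableType d1) (G : measurableType d2) (Gr : groupoid X G)
  (lam : X -> {measure set G -> \bar R})
  (Y : nat -> set X) :
  borel_groupoid Gr ->
  haar_system Gr lam ->
  (forall i, measurable (Y i) /\ invariant_set Gr (Y i)) ->
  \bigcup_i Y i = setT ->
  (forall i, borel_amenable_on R Gr (Y i)) ->
  borel_amenable R Gr.
Proof.
move=> [isG [mr ms mu mi] mcomp mmul mpt] Hlam HY HU HA.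
have /choice [mm Hmm] := HA.
have Hex : forall u, exists j, `[< Y j u >].
  move=> u; have : [set: X] u by [].
  by rewrite -HU => -[j _ ?]; exists j; apply/asboolP.
pose idx u := ex_minn (Hex u).
have idxP : forall u, Y (idx u) u /\ forall j, Y j u -> (idx u <= j)%N.
  move=> u; rewrite /idx; case: ex_minnP => m /asboolP Hm Hmin; split => //.
  by move=> j Hj; apply: Hmin; apply/asboolP.
have idx_eq : forall u v, (forall j, Y j u <-> Y j v) -> idx u = idx v.
  move=> u v Huv; have [Hu Hu'] := idxP u; have [Hv Hv'] := idxP v.
  apply/eqP; rewrite eqn_leq Hu' ?Hv' //; first exact/Huv.
  exact/Huv.
have redm : forall i, measurable (reduction Gr (Y i)).
  move=> i; have [mY _] := HY i.
  have -> : reduction Gr (Y i) = (g_r Gr @^-1` Y i) `&` (g_s Gr @^-1` Y i) by [].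
  apply: measurableI.
  - by have := mr measurableT _ mY; rewrite setTI.
  - by have := ms measurableT _ mY; rewrite setTI.
have fibred : forall i u, Y i u -> ~` reduction Gr (Y i) `<=` ~` fiber Gr u.
  move=> i u Yu; apply: subsetC => g; rewrite /fiber /reduction /= => rg; rewrite rg; split => //.
  by have [_ inv] := HY i; apply/inv; rewrite rg.
exists (fun n u => mm (idx u) n u).
have redT : reduction Gr setT = setT by apply/seteqP; split.
split.
- by move=> n u _; have [H1 _ _ _] := Hmm (idx u); apply: H1; apply: (idxP u).1.
- by move=> n u _; have [_ H2 _ _] := Hmm (idx u); apply: H2; apply: (idxP u).1.
- move=> n f; rewrite redT => mf f0.
  pose Z i := [set u | idx u = i].
  have ZU : \bigcup_i Z i = setT by apply/seteqP; split => // u _; exists (idx u).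
  have Zm : forall i, measurable (Z i).
    move=> i; have -> : Z i = Y i `\` \bigcup_(j in [set j | (j < i)%N]) Y j.
      apply/seteqP; split => u /=.
      - move=> <-; split; first exact: (idxP u).1.
        move=> [j /= ji Yj]; by have := (idxP u).2 j Yj; rewrite leqNgt ji.
      - move=> [Yi nY]; apply/eqP; rewrite eqn_leq (idxP u).2 //=.
        rewrite leqNgt; apply/negP => lt; apply: nY; exists (idx u) => //.
        exact: (idxP u).1.
    apply: measurableD; first exact: (HY i).1.
    by apply: bigcup_measurable => k _; exact: (HY k).1.
  rewrite -ZU; apply/measurable_fun_bigcup => // i.
  have [_ _ H3 _] := Hmm i.
  have mfi : measurable_fun (reduction Gr (Y i)) f by apply: measurable_funS mf.
  have := H3 n f mfi (fun x _ => f0 x I).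
  move/(measurable_funS (HY i).1 (_ : Z i `<=` Y i)).
  have ZY : Z i `<=` Y i by move=> u /= <-; exact: (idxP u).1.
  move/(_ ZY); apply: eq_measurable_fun => u; rewrite inE /= => <-.
  rewrite (@int_restr _ _ _ _ _ _ (redm (idx u))) //; first by move=> x; exact: f0.
  have [_ H2 _ _] := Hmm (idx u).
  apply/eqP; rewrite eq_le measure_ge0 andbT -(H2 n u (idxP u).1).
  have mF : measurable (~` fiber Gr u).
    apply: measurableC; have := mr measurableT _ (mpt u).
    by rewrite setTI.
  have mRd : measurable (~` reduction Gr (Y (idx u))).
    exact: measurableC (redm _).
  apply: (le_measure (mm (idx u) n u)); rewrite ?inE //.
  exact: fibred (idxP u).1.
- move=> g _.
  have e : idx (g_s Gr g) = idx (g_r Gr g).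
    by apply: idx_eq => j; have [_ inv] := HY j; apply: inv.
  rewrite e.
  have [_ _ _ H4] := Hmm (idx (g_r Gr g)); apply: H4; split => //.
  - exact: (idxP _).1.
  - by rewrite -e; exact: (idxP _).1.
Qed.
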